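(* Let $(t_1,s_1),(t_2,s_2)\in\mathbb{C}^\times\times\mathbb{C}^\times$ with $t_1\ne t_2$ and $s_1\neq s_2$, let $X_1=A_2(t_1,s_1)$, $X_2=A_2(t_2,s_2)$, and let $\mathfrak{M}_2^2(2)$ be the subgroup of invertible $2\times2$ complex matrices generated by $X_1,X_2$. Then for every $A\in\mathfrak{M}_2^2(2)$, either $A^{-1}=A$, or $A^{-1}=r_AI_2-A$ for some $r_A\in\mathbb{C}$.
   Context: $\mathbb{C}^\times=\mathbb{C}\setminus\{0\}$; $A_2(t,s)=\begin{pmatrix} t & s\\ \frac{1-t^2}{s} & -t\end{pmatrix}$; $I_2$ is the $2\times2$ identity matrix. *)

(* Defs.v *)
From mathcomp Require Import all_boot all_algebra.
From mathcomp Require Import complex.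
From mathcomp Require Import Rstruct.
From Stdlib Require Reals.

Set Implicit Arguments.
Unset Strict Implicit.
Unset Printing Implicit Defensive.

Import GRing.Theory Num.Theory.
Local Open Scope ring_scope.

Definition C : numClosedFieldType := complex Rdefinitions.R.

Definition A2 (t s : C) : 'M[C]_2 :=
  \matrix_(i < 2, j < 2)
    if (i == 0 :> nat) then (if (j == 0 :> nat) then t else s)
    else (if (j == 0 :> nat) then (1 - t ^+ 2) / s else - t).

Inductive in_gen2 (X1 X2 : 'M[C]_2) : 'M[C]_2 -> Prop :=
  | gen_one : in_gen2 X1 X2 1%:M
  | gen_X1 : in_gen2 X1 X2 X1
  | gen_X2 : in_gen2 X1 X2 X2
  | gen_mul A B : in_gen2 X1 X2 A -> in_gen2 X1 X2 B -> in_gen2 X1 X2 (A *m B)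
  | gen_inv A : in_gen2 X1 X2 A -> in_gen2 X1 X2 (invmx A).

(* Main.v *)
Require Import Defs.
From mathcomp Require Import all_boot all_algebra.
From mathcomp Require Import complex.
From mathcomp Require Import ring.
Import GRing.Theory Num.Theory.
Local Open Scope ring_scope.

Lemma det_mx22 (M : 'M[C]_2) : \det M = M 0 0 * M 1 1 - M 0 1 * M 1 0.
Proof.
rewrite (expand_det_row _ 0) big_ord_recl big_ord1 /cofactor !det_mx11 ?mxE /=.
rewrite expr0 expr1 !mul1r mulN1r mulrN.
by congr (_ * M _ _ - M _ _ * M _ _); apply: ord_inj.
Qed.

Lemma A2sq (t s : C) : s != 0 -> A2 t s * A2 t s = 1.
Proof.
move=> hs; rewrite -mulmxE; apply/matrixP => i j.
rewrite ?mxE big_ord_recl big_ord1 ?mxE.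
case: i => [[|[|//]] hi]; case: j => [[|[|//]] hj] /=; rewrite ?mxE /=.
- match goal with |- ?a = ?b => change (@eq C a b) end; by field.
- match goal with |- ?a = ?b => change (@eq C a b) end; ring.
- match goal with |- ?a = ?b => change (@eq C a b) end; ring.
- match goal with |- ?a = ?b => change (@eq C a b) end; by field.
Qed.

Lemma detA2 (t s : C) : s != 0 -> \det (A2 t s) = -1.
Proof.
move=> hs; rewrite det_mx22 ?mxE /=. match goal with |- ?a = ?b => change (@eq C a b) end; by field.
Qed.

Lemma l1 : lift ord0 ord0 = 1 :> 'I_2. Proof. exact: ord_inj. Qed.
Lemma o0 : ord0 = 0 :> 'I_2. Proof. exact: ord_inj. Qed.
Lemma oi0 (h : (0 < 2)%N) : Ordinal h = 0 :> 'I_2. Proof. exact: ord_inj. Qed.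
Lemma oi1 (h : (1 < 2)%N) : Ordinal h = 1 :> 'I_2. Proof. exact: ord_inj. Qed.

Lemma det22 (M : 'M[C]_2) : M * ((\tr M)%:M - M) = (\det M)%:M.
Proof.
rewrite -mulmxE; apply/matrixP => i j.
rewrite ?mxE big_ord_recl big_ord1 ?mxE /mxtrace big_ord_recl big_ord1 det_mx22 ?mxE.
case: i => [[|[|//]] hi]; case: j => [[|[|//]] hj] /=; rewrite ?mxE /=.
all: rewrite ?l1 ?oi0 ?oi1; try rewrite o0.
all: match goal with |- ?a = ?b => change (@eq C a b) end; rewrite ?mulr1n ?mulr0n; ring.
Qed.

Lemma inv_of {x y : 'M[C]_2} : x * y = 1 -> y * x = 1 -> x \is a GRing.unit /\ x^-1 = y.
Proof.
move=> h1 h2; have u : x \is a GRing.unit by apply/unitrP; exists y.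
split=> //; by rewrite -[y]mul1r -(mulVr u) -mulrA h1 mulr1.
Qed.

Lemma det_pow (P : 'M[C]_2) : \det P = 1 -> forall n, \det (P ^+ n) = 1.
Proof.
move=> h; elim=> [|n IH]; first by rewrite expr0 det1.
by rewrite exprS -mulmxE det_mulmx h IH mulr1.
Qed.

Theorem mainTheorem12 (t1 s1 t2 s2 : C) :
  t1 != 0 -> s1 != 0 -> t2 != 0 -> s2 != 0 ->
  t1 != t2 -> s1 != s2 ->
  forall A : 'M[C]_2, in_gen2 (A2 t1 s1) (A2 t2 s2) A ->
    invmx A = A \/ exists r : C, invmx A = r%:M - A.
Proof.
move=> _ h1 _ h2 _ _ A hA.
set X1 := A2 t1 s1 in hA *; set X2 := A2 t2 s2 in hA *.
have X11 : X1 * X1 = 1 by exact: A2sq.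
have X22 : X2 * X2 = 1 by exact: A2sq.
pose P := X1 * X2; pose Q := X2 * X1.
have PQ : P * Q = 1 by rewrite /P /Q mulrA -(mulrA X1) X22 mulr1 X11.
have QP : Q * P = 1 by rewrite /P /Q mulrA -(mulrA X2) X11 mulr1 X22.
have [uP iP] := inv_of PQ QP.
have [uX1 iX1] := inv_of X11 X11.
have c1 : X1 * P = Q * X1 by rewrite /P /Q mulrA X11 mul1r -mulrA X11 mulr1.
have c2 : X1 * Q = P * X1 by rewrite /P /Q mulrA.
have cn1 : forall n, X1 * P ^+ n = Q ^+ n * X1.
  elim=> [|n IH]; first by rewrite !expr0 mul1r mulr1.
  by rewrite exprSr mulrA IH -mulrA c1 mulrA -exprSr.
have cn2 : forall n, X1 * Q ^+ n = P ^+ n * X1.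
  elim=> [|n IH]; first by rewrite !expr0 mul1r mulr1.
  by rewrite exprSr mulrA IH -mulrA c2 mulrA -exprSr.
have cz : forall z : int, X1 * P ^ z = P ^ (- z) * X1.
  case=> n.
  - rewrite -(exprz_inv P) iP; exact: cn1.
  - rewrite NegzE opprK -(exprz_inv P) iP; exact: cn2.
have key : exists z : int, A = P ^ z \/ A = P ^ z * X1.
  elim: hA.
  - by exists 0; left; rewrite expr0z.
  - by exists 0; right; rewrite expr0z mul1r.
  - exists (-1); right; rewrite -(exprz_inv P) iP expr1z /Q -mulrA X11 mulr1 //.
  - move=> B D _ [a [->|->]] _ [b [->|->]]; rewrite mulmxE.
    + by exists (a + b); left; rewrite exprzDr.
    + by exists (a + b); right; rewrite exprzDr // mulrA.
    + exists (a - b); right; rewrite exprzDr // -!mulrA; congr (_ * _); exact: cz.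
    + exists (a - b); left; rewrite exprzDr // -!mulrA; congr (_ * _).
      rewrite mulrA; transitivity (P ^ (- b) * X1 * X1).
      * by congr (_ * _); exact: cz.
      * by rewrite -mulrA X11 mulr1.
  - move=> B _ [a [->|->]].
    + by exists (- a); left; exact: invr_expz.
    + exists a; right.
      have -> : invmx (P ^ a * X1) = (P ^ a * X1)^-1 by [].
      rewrite invrM ?unitrXz // iX1.
      transitivity (X1 * P ^ (- a)); first by congr (_ * _); exact: invr_expz.
      transitivity (P ^ (- - a) * X1); first exact: cz.
      by rewrite opprK.
case: key => z [->|->].
- have dP : \det P = 1.
    by rewrite /P -mulmxE det_mulmx !detA2 // mulrNN mulr1.
  have dM : \det (P ^ z) = 1.
    case: z => n; first exact: det_pow.
    rewrite NegzE -invr_expz.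
    have -> : (P ^ (n.+1)%:Z)^-1 = invmx (P ^+ n.+1) by [].
    by rewrite det_inv det_pow // invr1.
  right; exists (\tr (P ^ z)).
  have h := det22 (P ^ z); rewrite dM in h.
  have u : P ^ z \is a GRing.unit by exact: unitrXz.
  have -> : invmx (P ^ z) = (P ^ z)^-1 by [].
  have hh : P ^ z * ((\tr (P ^ z))%:M - P ^ z) = 1 by exact h.
  by rewrite -[(_^-1)]mulr1 -hh mulKr.
- left.
  have -> : invmx (P ^ z * X1) = (P ^ z * X1)^-1 by [].
  have sq : (P ^ z * X1) * (P ^ z * X1) = 1.
    transitivity (P ^ z * (X1 * P ^ z) * X1); first by rewrite !mulrA.
    transitivity (P ^ z * (P ^ (- z) * X1) * X1).
      by congr (_ * _); congr (_ * _); exact: cz.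
    by rewrite mulrA -exprzDr // subrr expr0z mul1r X11.
  by have [_ ->] := inv_of sq sq.
Qed.
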